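(* Let $(\theta_t)_{t\in\mathbb R}$ be a smooth green path, $t_0\in\mathbb R$, and $M\in\mathcal G$ nonzero. Let $M=M_0\supsetneq M_1\supsetneq\cdots\supsetneq M_m=0$ be a chain of strict subobjects of $M$ with $M_{k-1}/M_k\in\mathcal W(\theta_{t_k})$ for real numbers $t_1>t_2>\cdots>t_m$ (such a chain exists and is unique). Then $M\in\mathcal P(\theta_{t_0})$ if and only if $t_k<t_0$ for all $k$, i.e. if and only if $t_1<t_0$.
   Context: Let $\Lambda$ be a finite dimensional algebra over a field with $n$ isoclasses of simple modules, and $\mathrm{mod}\text-\Lambda$ the category of finitely generated right $\Lambda$-modules. Fix a torsion class $\mathcal G\subseteq\mathrm{mod}\text-\Lambda$ (closed under isomorphisms, extensions and quotients). For $B\in\mathcal G$, a subobject of $B$ is a submodule in $\mathcal G$; a subobject $A\subseteq B$ is strict if $A\cap B'\in\mathcal G$ for every subobject $B'$ of $B$; a strict quotient of $B$ is $B/A$ with $A$ a strict subobject. Let $V_\Lambda=\mathrm{Hom}_{\mathbb Z}(K_0\Lambda,\mathbb R)\cong\mathbb R^n$; $\theta(M)$ denotes $\theta$ applied to the dimension vector of $M$. For $M\in\mathcal G$, $D_{\mathcal G}(M)$ is the set of $\theta$ with $\theta(M)=0$ and $\theta(M')\le0$ for every strict subobject $M'$ of $M$; $\mathcal W(\theta)$ is the class of $X\in\mathcal G$ with $\theta\in D_{\mathcal G}(X)$. $\mathcal P(\theta)$ is the class consisting of $0$ and all nonzero $M\in\mathcal G$ with $\theta(M'')>0$ for every nonzero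 strict quotient $M''$ of $M$ (including $M''=M$). A smooth green path is a smooth map $t\mapsto\theta_t$, $\mathbb R\to V_\Lambda$, such that: (1) whenever $\theta_{t_0}\in D_{\mathcal G}(M)$ for some nonzero $M\in\mathcal G$, $\frac{d}{dt}\theta_t(M)|_{t=t_0}>0$; (2) there is $T$ such that $\theta_t(M)>0$ for all $t>T$ and all nonzero $M\in\mathcal G$; (3) there is $T'$ such that $\theta_t(M)<0$ for all $t<T'$ and all nonzero $M\in\mathcal G$. *)

(* Defs.v *)
From HB Require Import structures.
From mathcomp Require Import all_boot all_order all_algebra.
From mathcomp Require Import falgebra.
From mathcomp Require Import all_classical all_reals all_analysis.
Set Implicit Arguments. Unset Strict Implicit. Unset Printing Implicit Defensive.
Import Order.TTheory GRing.Theory Num.Theory.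
Local Open Scope ring_scope.

Section Modules.
Variables (K : fieldType) (L : falgType K).

(* A finitely generated right L-module: K^d (row vectors) with a right
   action  v . a := v *m ract a. *)
Record rmod := RMod {
  rdim : nat;
  ract : L -> 'M[K]_rdim;
  ractD : forall a b, ract (a + b) = ract a + ract b;
  ractZ : forall (c : K) a, ract (c *: a) = c *: ract a;
  ract1 : ract 1 = 1%:M;
  ractM : forall a b, ract (a * b) = ract a *m ract b }.

Definition submod (M : rmod) (U : 'M[K]_(rdim M)) : Prop :=
  forall a, (U *m ract M a <= U)%MS.

(* The subquotient U/V of M (V <= U submodules) is isomorphic to N:
   F : N -> U, x |-> x *m F, induces an L-linear bijection N ~ U/V. *)
Definition sq_iso (M : rmod) (U V : 'M[K]_(rdim M)) (N : rmod) : Prop :=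
  exists F : 'M[K]_(rdim N, rdim M),
    [/\ row_free F, (F + V :=: U)%MS, (\rank F + \rank V)%N = \rank U
      & forall a, (F *m ract M a - ract N a *m F <= V)%MS].

Definition mod_iso (N N' : rmod) : Prop := @sq_iso N' 1%:M 0 N.
End Modules.

Section TorsionClass.
Variables (K : fieldType) (L : falgType K) (R : realType).
Variable G : rmod L -> Prop.

Definition inG (B : rmod L) (U V : 'M[K]_(rdim B)) : Prop :=
  exists N, G N /\ sq_iso U V N.

(* G is a torsion class: closed under isomorphisms, quotients, extensions. *)
Definition torsion_class : Prop :=
  [/\ forall N N' : rmod L, mod_iso N N' -> G N -> G N',
      forall (B : rmod L) (U : 'M[K]_(rdim B)),
        submod U -> G B -> inG 1%:M U
    & forall (B : rmod L) (U : 'M[K]_(rdim B)),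
        submod U -> inG U 0 -> inG 1%:M U -> G B].

Definition subobj (B : rmod L) (U : 'M[K]_(rdim B)) : Prop :=
  submod U /\ inG U 0.

Definition strict_sub (B : rmod L) (U : 'M[K]_(rdim B)) : Prop :=
  subobj U /\ forall U', subobj U' -> inG (U :&: U')%MS 0.

(* theta in V_Lambda = Hom(K_0(mod L), R): a real-valued function on modules,
   additive on short exact sequences 0 -> N1 -> B -> N2 -> 0. *)
Definition additive (theta : rmod L -> R) : Prop :=
  forall (B : rmod L) (U : 'M[K]_(rdim B)) (N1 N2 : rmod L),
    submod U -> sq_iso U 0 N1 -> sq_iso 1%:M U N2 ->
    theta B = theta N1 + theta N2.

Definition inD (theta : rmod L -> R) (X : rmod L) : Prop :=
  theta X = 0 /\
  forall (U : 'M[K]_(rdim X)) (N : rmod L),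
    strict_sub U -> sq_iso U 0 N -> theta N <= 0.

Definition inW (theta : rmod L -> R) (X : rmod L) : Prop := G X /\ inD theta X.

Definition inP (theta : rmod L -> R) (X : rmod L) : Prop :=
  G X /\
  forall (A : 'M[K]_(rdim X)) (N : rmod L),
    strict_sub A -> ~ (1%:M <= A)%MS -> sq_iso 1%:M A N -> 0 < theta N.

Definition smooth (f : R -> R) : Prop :=
  forall (k : nat) (x : R), derivable (derive1n k f) x 1.

Definition green_path (theta : R -> rmod L -> R) : Prop :=
  [/\ forall t, additive (theta t),
      forall N, smooth (fun t => theta t N),
      forall (t0 : R) (N : rmod L), G N -> (0 < rdim N)%N ->
        inD (theta t0) N -> 0 < derive1 (fun t => theta t N) t0,
      exists T : R, forall (t : R) (N : rmod L), T < t -> G N ->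
        (0 < rdim N)%N -> 0 < theta t N
    & exists T' : R, forall (t : R) (N : rmod L), t < T' -> G N ->
        (0 < rdim N)%N -> theta t N < 0].
End TorsionClass.

(* Main.v *)
Require Import Defs.
From HB Require Import structures.
From mathcomp Require Import all_boot all_order all_algebra.
From mathcomp Require Import falgebra.
From mathcomp Require Import all_classical all_reals all_analysis.
From mathcomp Require Import zify ring lra.
Import Order.TTheory GRing.Theory Num.Theory.
Local Open Scope ring_scope.
Set Implicit Arguments. Unset Strict Implicit. Unset Printing Implicit Defensive.

Section Frame.
Variables (K : fieldType) (L : falgType K).

Lemma sub_mod_eq m n p (a b : 'M[K]_(m, n)) (C : 'M[K]_(p, n)) :
  (a - b <= C)%MS -> (a <= C)%MS = (b <= C)%MS.
Proof.
move=> h; apply/idP/idP => h2.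
  have -> : b = a - (a - b) by rewrite opprB addrC subrK.
  by apply: addmx_sub => //; rewrite eqmx_opp.
have -> : a = (a - b) + b by rewrite subrK.
exact: addmx_sub.
Qed.

Lemma sub_mod_sym m n p (a b : 'M[K]_(m, n)) (C : 'M[K]_(p, n)) :
  (a - b <= C)%MS -> (b - a <= C)%MS.
Proof. by move=> h; rewrite -opprB eqmx_opp. Qed.

Lemma sub_mod_add m n p (a b c d : 'M[K]_(m, n)) (C : 'M[K]_(p, n)) :
  (a - b <= C)%MS -> (c - d <= C)%MS -> ((a + c) - (b + d) <= C)%MS.
Proof.
move=> h1 h2; have -> : (a + c) - (b + d) = (a - b) + (c - d).
  by rewrite opprD addrACA.
exact: addmx_sub.
Qed.

Lemma sub_mod_trans m n p (a b c : 'M[K]_(m, n)) (C : 'M[K]_(p, n)) :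
  (a - b <= C)%MS -> (b - c <= C)%MS -> (a - c <= C)%MS.
Proof.
move=> h1 h2; have -> : a - c = (a - b) + (b - c) by rewrite addrA subrK.
exact: addmx_sub.
Qed.

Lemma sq_iso_eqmx (Y N : rmod L) (U U' V V' : 'M[K]_(rdim Y)) :
  (U :=: U')%MS -> (V :=: V')%MS -> sq_iso U V N -> sq_iso U' V' N.
Proof.
move=> eU eV [F [h1 h2 h3 h4]]; exists F; split=> //.
- exact: (eqmx_trans (adds_eqmx (eqmx_refl F) (eqmx_sym eV)) (eqmx_trans h2 eU)).
- by rewrite -eU -eV.
- by move=> a; rewrite -eV.
Qed.

Definition coef (n r p : nat) (F : 'M[K]_(r, n)) (V : 'M[K]_(p, n)) m (x : 'M[K]_(m, n)) :
  'M[K]_(m, r) := lsubmx (x *m pinvmx (col_mx F V)).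

Lemma coefP n r p (F : 'M[K]_(r, n)) (V : 'M[K]_(p, n)) m (x : 'M[K]_(m, n)) :
  (x <= F + V)%MS -> (x - coef F V x *m F <= V)%MS.
Proof.
rewrite addsmxE => /mulmxKpV hx.
rewrite /coef; set D := x *m pinvmx _.
have -> : x = lsubmx D *m F + rsubmx D *m V by rewrite -mul_row_col hsubmxK.
by rewrite addrC addKr submxMl.
Qed.

Section FrameVars.
Variables (nY rN : nat) (U V : 'M[K]_nY) (F : 'M[K]_(rN, nY)).
Hypotheses (hF : row_free F) (hFV : (F + V :=: U)%MS)
  (hrk : (\rank F + \rank V)%N = \rank U).

Lemma capFV0 : (F :&: V)%MS = 0.
Proof.
apply/eqP; rewrite -mxrank_eq0; apply/eqP.
have e := mxrank_sum_cap F V.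
have e2 : \rank (F + V)%MS = \rank U by rewrite hFV.
lia.
Qed.

Lemma killF m (X : 'M[K]_(m, rN)) : (X *m F <= V)%MS -> X = 0.
Proof.
move=> h; have : (X *m F <= F :&: V)%MS by rewrite sub_capmx submxMl h.
rewrite capFV0 submx0 => /eqP e.
by apply: (row_free_inj hF); rewrite mul0mx.
Qed.

Lemma phiP m k (X : 'M[K]_(m, rN)) (W : 'M[K]_(k, rN)) :
  (X *m F <= W *m F + V)%MS = (X <= W)%MS.
Proof.
apply/idP/idP => h; last by rewrite (submx_trans (submxMr F h)) ?addsmxSl.
move: h; rewrite addsmxE => /submxP [D hD].
have e : X *m F = (lsubmx D *m W) *m F + rsubmx D *m V.
  by rewrite hD -{1}(hsubmxK D) mul_row_col mulmxA.
have : ((X - lsubmx D *m W) *m F <= V)%MS.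
  by rewrite mulmxBl e addrC addKr submxMl.
move/killF/eqP; rewrite subr_eq0 => /eqP ->; exact: submxMl.
Qed.

Lemma F_sub_U : (F <= U)%MS.
Proof. by rewrite -hFV addsmxSl. Qed.

Lemma V_sub_U : (V <= U)%MS.
Proof. by rewrite -hFV addsmxSr. Qed.

Lemma phi_sub_U k (W : 'M[K]_(k, rN)) : ((W *m F + V)%MS <= U)%MS.
Proof. by rewrite addsmx_sub V_sub_U andbT (submx_trans (submxMl _ _) F_sub_U). Qed.

Lemma coefS m k (x : 'M[K]_(m, nY)) (W : 'M[K]_(k, rN)) :
  (x <= U)%MS -> (x <= W *m F + V)%MS = (coef F V x <= W)%MS.
Proof.
move=> hx; rewrite -phiP; apply: sub_mod_eq.
apply: submx_trans (addsmxSr _ _); apply: coefP; by rewrite hFV.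
Qed.

Lemma coef_onto (C : 'M[K]_(nY)) : (V <= C)%MS -> (C <= U)%MS ->
  ((coef F V C) *m F + V :=: C)%MS.
Proof.
move=> hVC hCU; apply/eqmxP/andP; split; last by rewrite (coefS _ hCU) submx_refl.
rewrite addsmx_sub hVC andbT.
have h : (C <= F + V)%MS by rewrite hFV.
by rewrite -(sub_mod_eq (submx_trans (coefP h) hVC)) submx_refl.
Qed.

Lemma rank_phi k (W : 'M[K]_(k, rN)) : \rank (W *m F + V)%MS = (\rank W + \rank V)%N.
Proof.
have := mxrank_sum_cap (W *m F) V.
have -> : (W *m F :&: V)%MS = 0.
  apply/eqP; rewrite -submx0 -capFV0; apply: capmxS => //; exact: submxMl.
by rewrite mxrank0 addn0 mxrankMfree.
Qed.

Lemma phi_cap (W1 W2 : 'M[K]_(rN)) :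
  ((W1 :&: W2)%MS *m F + V :=: (W1 *m F + V)%MS :&: (W2 *m F + V)%MS)%MS.
Proof.
apply/eqmxP; apply/andP; split.
  by rewrite sub_capmx !addsmx_sub !phiP capmxSl capmxSr !addsmxSr.
have hU : (((W1 *m F + V)%MS :&: (W2 *m F + V)%MS)%MS <= U)%MS.
  exact: submx_trans (capmxSl _ _) (phi_sub_U _).
rewrite (coefS _ hU) sub_capmx -!(coefS _ hU) capmxSl capmxSr //.
Qed.

End FrameVars.
End Frame.

Section Frame2.
Variables (K : fieldType) (L : falgType K).
Variables (Y N : rmod L) (U V : 'M[K]_(rdim Y)) (F : 'M[K]_(rdim N, rdim Y)).
Hypotheses (hF : row_free F) (hFV : (F + V :=: U)%MS)
  (hrk : (\rank F + \rank V)%N = \rank U)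
  (hact : forall a, (F *m ract Y a - ract N a *m F <= V)%MS)
  (hV : submod V).

Local Notation phi W := (W *m F + V)%MS.

Lemma submod_phi (W : 'M[K]_(rdim N)) : submod W <-> submod (phi W).
Proof.
split=> hW a.
  rewrite addsmxMr addsmx_sub (submx_trans (hV a) (addsmxSr _ _)) andbT.
  have e : W *m F *m ract Y a - W *m ract N a *m F = W *m (F *m ract Y a - ract N a *m F).
    by rewrite mulmxBr !mulmxA.
  have h : (W *m F *m ract Y a - W *m ract N a *m F <= phi W)%MS.
    by rewrite e (submx_trans (submxMl _ _) (submx_trans (hact a) (addsmxSr _ _))).
  by rewrite (sub_mod_eq h) (phiP hF hFV hrk) (hW a).
rewrite -(phiP hF hFV hrk).
have e : W *m F *m ract Y a - W *m ract N a *m F = W *m (F *m ract Y a - ract N a *m F).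
  by rewrite mulmxBr !mulmxA.
have h : (W *m F *m ract Y a - W *m ract N a *m F <= phi W)%MS.
  by rewrite e (submx_trans (submxMl _ _) (submx_trans (hact a) (addsmxSr _ _))).
rewrite -(sub_mod_eq h).
apply: submx_trans (hW a); apply: submxMr; exact: addsmxSl.
Qed.

Lemma sq_iso_phi (W1 W2 : 'M[K]_(rdim N)) (N' : rmod L) :
  sq_iso W1 W2 N' -> sq_iso (phi W1) (phi W2) N'.
Proof.
move=> [H [h1 h2 h3 h4]]; exists (H *m F); split.
- by rewrite /row_free mxrankMfree.
- have hH : (H <= W1)%MS by rewrite -h2 addsmxSl.
  have hW : (W2 <= W1)%MS by rewrite -h2 addsmxSr.
  apply/eqmxP/andP; split.
    by rewrite !addsmx_sub !(phiP hF hFV hrk) hH hW /=; apply: addsmxSr.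
  rewrite addsmx_sub; apply/andP; split; last first.
    by apply: submx_trans (addsmxSr _ _) (addsmxSr _ _).
  rewrite addsmxA.
  have hM : ((H + W2)%MS *m F <= H *m F + W2 *m F)%MS by rewrite addsmxMr.
  apply: submx_trans (addsmxS hM (submx_refl V)).
  by rewrite (phiP hF hFV hrk) h2.
- rewrite mxrankMfree // !(rank_phi hF hFV hrk); lia.
- move=> a.
  have e : H *m F *m ract Y a - ract N' a *m (H *m F) - (H *m ract N a - ract N' a *m H) *m F
     = H *m (F *m ract Y a - ract N a *m F).
    by rewrite mulmxBl !mulmxA opprB addrA subrK mulmxBr !mulmxA.
  have h : (H *m F *m ract Y a - ract N' a *m (H *m F) - (H *m ract N a - ract N' a *m H) *m F
     <= phi W2)%MS.
    by rewrite e (submx_trans (submxMl _ _) (submx_trans (hact a) (addsmxSr _ _))).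
  by rewrite (sub_mod_eq h) (phiP hF hFV hrk).
Qed.

Lemma sq_iso_phiV (W1 W2 : 'M[K]_(rdim N)) (N' : rmod L) :
  sq_iso (phi W1) (phi W2) N' -> sq_iso W1 W2 N'.
Proof.
move=> [H' [h1 h2 h3 h4]].
have hH'U : (H' <= U)%MS.
  by apply: submx_trans (phi_sub_U hFV W1); rewrite -h2 addsmxSl.
have hH'FV : (H' <= F + V)%MS by rewrite hFV.
set H := coef F V H'.
have hd : (H' - H *m F <= V)%MS := coefP hH'FV.
have hVW2 : (V <= phi W2)%MS := addsmxSr _ _.
have cap0 : (H' :&: phi W2)%MS = 0.
  apply/eqP; rewrite -mxrank_eq0; apply/eqP.
  have e := mxrank_sum_cap H' (phi W2).
  have e2 : \rank (H' + phi W2)%MS = \rank (phi W1) by rewrite h2.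
  lia.
have key : forall m (x : 'M[K]_(m, rdim N')), (x *m H <= W2)%MS -> x = 0.
  move=> m x hx.
  have hx1 : (x *m H' <= phi W2)%MS.
    have hh : (x *m H' - x *m H *m F <= phi W2)%MS.
      by rewrite -mulmxA -mulmxBr (submx_trans (submxMl _ _) (submx_trans hd hVW2)).
    by rewrite (sub_mod_eq hh) (phiP hF hFV hrk).
  have : (x *m H' <= H' :&: phi W2)%MS by rewrite sub_capmx submxMl hx1.
  rewrite cap0 submx0 => /eqP e.
  by apply: (row_free_inj h1); rewrite mul0mx.
have hsum : (H + W2 :=: W1)%MS.
  apply/eqmxP/andP; split.
    rewrite addsmx_sub -!(phiP hF hFV hrk).
    rewrite -(sub_mod_eq (submx_trans hd (addsmxSr (W1 *m F) V))).
    apply/andP; split; first by rewrite -h2 addsmxSl.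
    by rewrite -h2; apply: submx_trans (addsmxSl (W2 *m F) V) (addsmxSr _ _).
  rewrite -(phiP hF hFV hrk).
  have hV' : (V <= (H + W2)%MS *m F + V)%MS := addsmxSr _ _.
  have hHF : (H *m F <= (H + W2)%MS *m F + V)%MS by rewrite (phiP hF hFV hrk) addsmxSl.
  have hW2F : (W2 *m F <= (H + W2)%MS *m F + V)%MS by rewrite (phiP hF hFV hrk) addsmxSr.
  apply: (submx_trans (addsmxSl (W1 *m F) V)).
  rewrite -h2 !addsmx_sub hV' hW2F andbT.
  by rewrite andbT (sub_mod_eq (submx_trans hd hV')) hHF.
exists H; split.
- rewrite -kermx_eq0; apply/eqP; apply: key.
  by rewrite mulmx_ker sub0mx.
- exact: hsum.
- have capH : (H :&: W2)%MS = 0.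
    apply/eqP; rewrite -submx0.
    have hy : ((H :&: W2)%MS <= H)%MS := capmxSl _ _.
    have e := mulmxKpV hy.
    have e0 : (H :&: W2)%MS *m pinvmx H = 0 by apply: key; rewrite e capmxSr.
    by rewrite -e e0 mul0mx sub0mx.
  have e1 := mxrank_sum_cap H W2.
  have e2 : \rank (H + W2)%MS = \rank W1 by rewrite hsum.
  rewrite capH mxrank0 in e1; lia.
- move=> a; rewrite -(phiP hF hFV hrk).
  set aN := ract N a; set aY := ract Y a; set a' := ract N' a.
  have d1 : ((H *m aN - a' *m H) *m F - (H *m F *m aY - a' *m (H *m F)) <= V)%MS.
    have -> : (H *m aN - a' *m H) *m F - (H *m F *m aY - a' *m (H *m F))
       = - (H *m (F *m aY - aN *m F)).
      by rewrite mulmxBl mulmxBr !mulmxA !opprB addrA subrK.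
    by rewrite eqmx_opp; apply: submx_trans (submxMl _ _) (hact a).
  have d2 : ((H *m F *m aY - a' *m (H *m F)) - (H' *m aY - a' *m H') <= V)%MS.
    apply: sub_mod_add.
      rewrite -mulmxBl; apply: submx_trans (submxMr _ (sub_mod_sym hd)) (hV a).
    rewrite opprK addrC -mulmxBr.
    exact: submx_trans (submxMl _ _) hd.
  have d := sub_mod_trans d1 d2.
  rewrite (sub_mod_eq (submx_trans d hVW2)); exact: h4.
Qed.
End Frame2.

Section Constr.
Variables (K : fieldType) (L : falgType K).

Lemma submod_eqmx (Y : rmod L) (A B : 'M[K]_(rdim Y)) :
  (A :=: B)%MS -> submod A -> submod B.
Proof.
move=> e hA a; rewrite -e.
by apply: submx_trans (hA a); rewrite (eqmxMr _ e).
Qed.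

Lemma submod0 (Y : rmod L) : submod (0 : 'M[K]_(rdim Y)).
Proof. by move=> a; rewrite mul0mx sub0mx. Qed.

Lemma submod1 (Y : rmod L) : submod (1%:M : 'M[K]_(rdim Y)).
Proof. by move=> a; rewrite submx1. Qed.

Lemma submod_cap (Y : rmod L) (A B : 'M[K]_(rdim Y)) :
  submod A -> submod B -> submod (A :&: B)%MS.
Proof.
move=> hA hB a; rewrite sub_capmx.
by rewrite (submx_trans (submxMr _ (capmxSl _ _)) (hA a))
           (submx_trans (submxMr _ (capmxSr _ _)) (hB a)).
Qed.

Lemma submod_adds (Y : rmod L) (A B : 'M[K]_(rdim Y)) :
  submod A -> submod B -> submod (A + B)%MS.
Proof.
move=> hA hB a; rewrite addsmxMr addsmx_sub.
by rewrite (submx_trans (hA a) (addsmxSl _ _)) (submx_trans (hB a) (addsmxSr _ _)).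
Qed.

Lemma sq_iso_rank (Y N : rmod L) (U V : 'M[K]_(rdim Y)) :
  sq_iso U V N -> \rank U = (rdim N + \rank V)%N.
Proof. by move=> [F [h1 h2 h3 h4]]; rewrite -h3 (eqP h1). Qed.

Lemma sq_iso_sub (Y N : rmod L) (U V : 'M[K]_(rdim Y)) :
  sq_iso U V N -> (V <= U)%MS.
Proof. by move=> [F [h1 h2 h3 h4]]; rewrite -h2 addsmxSr. Qed.

Lemma sq_iso_dim0 (Y N : rmod L) (V : 'M[K]_(rdim Y)) :
  rdim N = 0%N -> sq_iso V V N.
Proof.
move=> e; exists 0; split.
- by rewrite /row_free mxrank0 e.
- exact: adds0mx.
- by rewrite mxrank0.
- by move=> a; rewrite mul0mx mulmx0 subrr sub0mx.
Qed.

Definition zmod : rmod L.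
Proof.
refine (@RMod K L 0 (fun _ => 0) _ _ _ _).
- by move=> a b; rewrite addr0.
- by move=> c a; rewrite scaler0.
- by rewrite [1%:M]flatmx0.
- by move=> a b; rewrite mul0mx.
Defined.

Lemma rdim_zmod : rdim zmod = 0%N. Proof. by []. Qed.

Section Build.
Variables (Y : rmod L) (U V : 'M[K]_(rdim Y)).
Hypotheses (hU : submod U) (hV : submod V) (hVU : (V <= U)%MS).

Let r : nat := \rank (U :\: V)%MS.
Let F : 'M[K]_(r, rdim Y) := row_base (U :\: V)%MS.


Lemma bFV : (F + V :=: U)%MS.
Proof.
have e1 : (U :&: V :=: V)%MS by apply/capmx_idPr.
apply: eqmx_trans (addsmx_diff_cap_eq U V).
exact: adds_eqmx (eq_row_base _) (eqmx_sym e1).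
Qed.

Lemma brk : (\rank F + \rank V)%N = \rank U.
Proof.
have e1 : (U :&: V :=: V)%MS by apply/capmx_idPr.
have := mxrank_cap_compl U V; rewrite e1 /F eq_row_base; lia.
Qed.

Lemma bF : row_free F. Proof. exact: row_base_free. Qed.

Definition bact (a : L) : 'M[K]_r := coef F V (F *m ract Y a).

Lemma bactP a : (F *m ract Y a - bact a *m F <= V)%MS.
Proof.
apply: coefP; rewrite bFV.
apply: submx_trans (hU a); apply: submxMr.
by rewrite -bFV addsmxSl.
Qed.

Lemma bact_uniq a (X : 'M[K]_r) : (F *m ract Y a - X *m F <= V)%MS -> bact a = X.
Proof.
move=> h; apply/eqP; rewrite -subr_eq0; apply/eqP.
apply: (killF bF bFV brk).
rewrite mulmxBl; apply: sub_mod_trans (sub_mod_sym (bactP a)) h.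
Qed.

Lemma bactD a b : bact (a + b) = bact a + bact b.
Proof.
apply: bact_uniq; rewrite ractD mulmxDr mulmxDl.
exact: sub_mod_add (bactP a) (bactP b).
Qed.

Lemma bactZ (c : K) a : bact (c *: a) = c *: bact a.
Proof.
apply: bact_uniq; rewrite ractZ -scalemxAr -scalemxAl -scalerBr.
exact: scalemx_sub (bactP a).
Qed.

Lemma bact1 : bact 1 = 1%:M.
Proof. by apply: bact_uniq; rewrite ract1 mulmx1 mul1mx subrr sub0mx. Qed.

Lemma bactM a b : bact (a * b) = bact a *m bact b.
Proof.
apply: bact_uniq; rewrite ractM mulmxA.
have h1 : (F *m ract Y a *m ract Y b - bact a *m F *m ract Y b <= V)%MS.
  by rewrite -mulmxBl; apply: submx_trans (submxMr _ (bactP a)) (hV b).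
have h2 : (bact a *m F *m ract Y b - bact a *m bact b *m F <= V)%MS.
  by rewrite -(mulmxA (bact a) F) -(mulmxA (bact a) (bact b)) -mulmxBr; apply: submx_trans (submxMl _ _) (bactP b).
exact: sub_mod_trans h1 h2.
Qed.

Definition bmod : rmod L := @RMod K L r bact bactD bactZ bact1 bactM.

Lemma bmod_sq : sq_iso U V bmod.
Proof. exists F; split; [exact: bF | exact: bFV | exact: brk | exact: bactP]. Qed.

End Build.

Lemma exists_sq (Y : rmod L) (U V : 'M[K]_(rdim Y)) :
  submod U -> submod V -> (V <= U)%MS -> exists N, sq_iso U V N.
Proof. by move=> hU hV hVU; exists (bmod hU hV hVU); exact: bmod_sq. Qed.

End Constr.


Section Theta.
Variables (K : fieldType) (L : falgType K) (R : realType).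
Variable th : rmod L -> R.
Hypothesis hth : Defs.additive th.

Lemma phi0E nY rN (V : 'M[K]_nY) (F : 'M[K]_(rN, nY)) : ((0 : 'M[K]_rN) *m F + V :=: V)%MS.
Proof. by rewrite mul0mx; exact: adds0mx. Qed.

Lemma phi1E nY rN (U V : 'M[K]_nY) (F : 'M[K]_(rN, nY)) :
  (F + V :=: U)%MS -> ((1%:M : 'M[K]_rN) *m F + V :=: U)%MS.
Proof. by rewrite mul1mx. Qed.

Lemma th_dim0 (N : rmod L) : rdim N = 0%N -> th N = 0.
Proof.
move=> e.
have h0 : sq_iso (0 : 'M[K]_(rdim N)) 0 N := sq_iso_dim0 _ e.
have e1 : (1%:M : 'M[K]_(rdim N)) = 0 by apply/eqP; rewrite -mxrank_eq0 mxrank1 e.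
have h1 : sq_iso (1%:M : 'M[K]_(rdim N)) 0 N by rewrite e1.
have := hth (submod0 N) h0 h1; lra.
Qed.

Lemma th_iso (Y N1 N2 : rmod L) (U V : 'M[K]_(rdim Y)) :
  submod V -> sq_iso U V N1 -> sq_iso U V N2 -> th N1 = th N2.
Proof.
move=> hV [F [hF hFV hrk hact]] h2.
have h3 : sq_iso (1%:M : 'M[K]_(rdim N1)) 0 N2.
  apply: (sq_iso_phiV hF hFV hrk hact hV).
  exact: sq_iso_eqmx (eqmx_sym (phi1E hFV)) (eqmx_sym (phi0E V F)) h2.
have := hth (submod0 N1) (sq_iso_dim0 (Y := N1) (N := zmod L) 0 (rdim_zmod L)) h3.
by rewrite (@th_dim0 (zmod L) (rdim_zmod L)) add0r.
Qed.

Lemma th_zero (Y N : rmod L) (U V : 'M[K]_(rdim Y)) :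
  sq_iso U V N -> (U <= V)%MS -> th N = 0.
Proof.
move=> h hUV; apply: th_dim0.
have := sq_iso_rank h; have := mxrankS hUV; have := mxrankS (sq_iso_sub h); lia.
Qed.

Lemma th_add (Y N0 N1 N2 : rmod L) (U V W : 'M[K]_(rdim Y)) :
  submod V -> submod W -> (V <= W)%MS -> (W <= U)%MS ->
  sq_iso U V N0 -> sq_iso W V N1 -> sq_iso U W N2 -> th N0 = th N1 + th N2.
Proof.
move=> hV hW hVW hWU [F [hF hFV hrk hact]] h1 h2.
set Wn := <<coef F V W>>%MS.
have ephi : (Wn *m F + V :=: W)%MS.
  apply: eqmx_trans (coef_onto hF hFV hrk hVW hWU).
  exact: adds_eqmx (eqmxMr F (genmxE _)) (eqmx_refl V).
have hWn : submod Wn.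
  apply/(submod_phi hF hFV hrk hact hV); exact: submod_eqmx (eqmx_sym ephi) hW.
have s1 : sq_iso Wn 0 N1.
  apply: (sq_iso_phiV hF hFV hrk hact hV).
  exact: sq_iso_eqmx (eqmx_sym ephi) (eqmx_sym (phi0E V F)) h1.
have s2 : sq_iso 1%:M Wn N2.
  apply: (sq_iso_phiV hF hFV hrk hact hV).
  exact: sq_iso_eqmx (eqmx_sym (phi1E hFV)) (eqmx_sym ephi) h2.
exact: hth hWn s1 s2.
Qed.

End Theta.

Section GLemmas.
Variables (K : fieldType) (L : falgType K).
Variable G : rmod L -> Prop.

Lemma inG_eqmx (Y : rmod L) (U U' V V' : 'M[K]_(rdim Y)) :
  inG G U V -> (U :=: U')%MS -> (V :=: V')%MS -> inG G U' V'.
Proof. by move=> [N [hN h]] eU eV; exists N; split => //; exact: sq_iso_eqmx eU eV h. Qed.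

Section FrameG.
Variables (Y N : rmod L) (U V : 'M[K]_(rdim Y)) (F : 'M[K]_(rdim N, rdim Y)).
Hypotheses (hF : row_free F) (hFV : (F + V :=: U)%MS)
  (hrk : (\rank F + \rank V)%N = \rank U)
  (hact : forall a, (F *m ract Y a - ract N a *m F <= V)%MS)
  (hV : submod V).

Local Notation phi W := (W *m F + V)%MS.

Lemma inG_phi (W1 W2 : 'M[K]_(rdim N)) : inG G W1 W2 <-> inG G (phi W1) (phi W2).
Proof.
split=> [[N' [hN' h]]|[N' [hN' h]]]; exists N'; split => //.
  exact: (sq_iso_phi hF hFV hrk hact).
exact: (sq_iso_phiV hF hFV hrk hact hV).
Qed.

Lemma phi_gen (C : 'M[K]_(rdim Y)) : (V <= C)%MS -> (C <= U)%MS ->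
  (<<coef F V C>>%MS *m F + V :=: C)%MS.
Proof.
move=> h1 h2; apply: eqmx_trans (coef_onto hF hFV hrk h1 h2).
exact: adds_eqmx (eqmxMr F (genmxE _)) (eqmx_refl V).
Qed.

End FrameG.

Hypothesis hG : torsion_class G.

Lemma inG_refl (Y0 : rmod L) (Y : rmod L) (V : 'M[K]_(rdim Y)) : G Y0 -> inG G V V.
Proof.
case: hG => hiso hquot hext hY0.
have [N [hN h]] := hquot Y0 1%:M (submod1 Y0) hY0.
exists N; split => //; apply: sq_iso_dim0.
have := sq_iso_rank h; lia.
Qed.

Lemma QC (Y : rmod L) (U V W : 'M[K]_(rdim Y)) :
  submod V -> submod W -> (V <= W)%MS -> (W <= U)%MS -> inG G U V -> inG G U W.
Proof.
case: hG => hiso hquot hext.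
move=> hV hW hVW hWU [N0 [hN0 [F [hF hFV hrk hact]]]].
set Wn := <<coef F V W>>%MS.
have ephi := phi_gen hF hFV hrk hVW hWU.
have hWn : submod Wn.
  apply/(submod_phi hF hFV hrk hact hV); exact: submod_eqmx (eqmx_sym ephi) hW.
have := hquot N0 Wn hWn hN0.
move/(inG_phi hF hFV hrk hact hV) => h.
exact: inG_eqmx h (phi1E hFV) ephi.
Qed.

Lemma EC (Y : rmod L) (U V W : 'M[K]_(rdim Y)) :
  submod U -> submod V -> submod W -> (V <= W)%MS -> (W <= U)%MS ->
  inG G W V -> inG G U W -> inG G U V.
Proof.
case: hG => hiso hquot hext.
move=> hU hV hW hVW hWU h1 h2.
have hVU : (V <= U)%MS := submx_trans hVW hWU.
have [N0 [F [hF hFV hrk hact]]] := exists_sq hU hV hVU.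
set Wn := <<coef F V W>>%MS.
have ephi := phi_gen hF hFV hrk hVW hWU.
have hWn : submod Wn.
  apply/(submod_phi hF hFV hrk hact hV); exact: submod_eqmx (eqmx_sym ephi) hW.
have g1 : inG G Wn 0.
  apply/(inG_phi hF hFV hrk hact hV).
  exact: inG_eqmx h1 (eqmx_sym ephi) (eqmx_sym (phi0E V F)).
have g2 : inG G 1%:M Wn.
  apply/(inG_phi hF hFV hrk hact hV).
  exact: inG_eqmx h2 (eqmx_sym (phi1E hFV)) (eqmx_sym ephi).
exists N0; split; first exact: hext hWn g1 g2.
by exists F.
Qed.

Lemma ISO2 (Y N : rmod L) (A B : 'M[K]_(rdim Y)) :
  sq_iso A (A :&: B)%MS N -> sq_iso (A + B)%MS B N.
Proof.
move=> [F [hF hFV hrk hact]]; exists F; split => //.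
- apply/eqmxP/andP; split.
    rewrite addsmx_sub addsmxSr andbT.
    by apply: submx_trans (addsmxSl A B); rewrite -hFV addsmxSl.
  rewrite addsmx_sub addsmxSr andbT -hFV addsmx_sub addsmxSl /=.
  exact: submx_trans (capmxSr _ _) (addsmxSr _ _).
- have := mxrank_sum_cap A B; lia.
- by move=> a; apply: submx_trans (hact a) (capmxSr _ _).
Qed.

Lemma ISO2inv (Y : rmod L) (A B : 'M[K]_(rdim Y)) :
  submod A -> submod B -> inG G (A + B)%MS B -> inG G A (A :&: B)%MS.
Proof.
case: hG => hiso hquot hext.
move=> hA hB [N [hN h]].
have hAB := submod_cap hA hB.
have [N3 h3] := exists_sq hA hAB (capmxSl A B).
have h4 := ISO2 h3.
case: h4 => [F [hF hFV hrk hact]].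
have h5 : sq_iso (1%:M : 'M[K]_(rdim N3)) 0 N.
  apply: (sq_iso_phiV hF hFV hrk hact hB).
  exact: sq_iso_eqmx (eqmx_sym (phi1E hFV)) (eqmx_sym (phi0E B F)) h.
exists N3; split => //; exact: hiso h5 hN.
Qed.

Definition sstrict (Y : rmod L) (U V W : 'M[K]_(rdim Y)) : Prop :=
  [/\ submod W, (V <= W)%MS, (W <= U)%MS, inG G W V &
      forall C, submod C -> (V <= C)%MS -> (C <= U)%MS -> inG G C V ->
        inG G (W :&: C)%MS V].

Lemma strict_sstrict (Y : rmod L) (W : 'M[K]_(rdim Y)) :
  strict_sub G W <-> sstrict 1%:M 0 W.
Proof.
split.
  move=> [[hW hWG] hS]; split => //; [exact: sub0mx | exact: submx1 |].
  by move=> C hC _ _ hCG; apply: hS.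
move=> [hW _ _ hWG hS]; split => //.
by move=> C [hC hCG]; apply: hS => //; [exact: sub0mx | exact: submx1].
Qed.

End GLemmas.

Section Strict.
Variables (K : fieldType) (L : falgType K).
Variable G : rmod L -> Prop.

Lemma sstrict_eqmx (Y : rmod L) (U V W W' : 'M[K]_(rdim Y)) :
  (W :=: W')%MS -> sstrict G U V W -> sstrict G U V W'.
Proof.
move=> e [h1 h2 h3 h4 h5]; split.
- exact: submod_eqmx e h1.
- by rewrite -e.
- by rewrite -e.
- exact: inG_eqmx h4 e (eqmx_refl V).
- move=> C hC hVC hCU hCG; apply: inG_eqmx (h5 C hC hVC hCU hCG) _ (eqmx_refl V).
  exact: cap_eqmx e (eqmx_refl C).
Qed.

Section FrameS.
Variables (Y N : rmod L) (U V : 'M[K]_(rdim Y)) (F : 'M[K]_(rdim N, rdim Y)).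
Hypotheses (hF : row_free F) (hFV : (F + V :=: U)%MS)
  (hrk : (\rank F + \rank V)%N = \rank U)
  (hact : forall a, (F *m ract Y a - ract N a *m F <= V)%MS)
  (hV : submod V).

Local Notation phi W := (W *m F + V)%MS.

Lemma sstrict_phi (W : 'M[K]_(rdim N)) : strict_sub G W <-> sstrict G U V (phi W).
Proof.
have iG := inG_phi G hF hFV hrk hact hV.
have sP := submod_phi hF hFV hrk hact hV.
split.
  move=> [[hW hWG] hS]; split.
  - exact/sP.
  - exact: addsmxSr.
  - exact: phi_sub_U.
  - exact: inG_eqmx ((iG _ _).1 hWG) (eqmx_refl _) (phi0E V F).
  - move=> C hC hVC hCU hCG.
    set Cn := <<coef F V C>>%MS.
    have ephi := phi_gen hF hFV hrk hVC hCU.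
    have hCn : submod Cn by apply/sP; exact: submod_eqmx (eqmx_sym ephi) hC.
    have hCnG : inG G Cn 0.
      apply/iG; exact: inG_eqmx hCG (eqmx_sym ephi) (eqmx_sym (phi0E V F)).
    have := (iG _ _).1 (hS Cn (conj hCn hCnG)).
    move/inG_eqmx; apply; last exact: phi0E.
    apply: eqmx_trans (phi_cap hF hFV hrk W Cn) _.
    exact: cap_eqmx (eqmx_refl _) ephi.
move=> [hs hVs hsU hsG hS]; split; first split.
- exact/sP.
- apply/iG; exact: inG_eqmx hsG (eqmx_refl _) (eqmx_sym (phi0E V F)).
- move=> Cn [hCn hCnG].
  have hC1 : inG G (phi Cn) V := inG_eqmx ((iG _ _).1 hCnG) (eqmx_refl _) (phi0E V F).
  have := hS (phi Cn) ((sP Cn).1 hCn) (addsmxSr _ _) (phi_sub_U hFV Cn) hC1.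
  move=> h; apply/iG.
  apply: inG_eqmx h _ (eqmx_sym (phi0E V F)).
  exact: eqmx_sym (phi_cap hF hFV hrk W Cn).
Qed.

End FrameS.

Hypothesis hG : torsion_class G.

Lemma TS (Y : rmod L) (U V W W' : 'M[K]_(rdim Y)) :
  sstrict G U V W -> sstrict G W V W' -> sstrict G U V W'.
Proof.
move=> [hW hVW hWU hWG hWS] [hW' hVW' hW'W hW'G hW'S]; split => //.
  exact: submx_trans hW'W hWU.
move=> C hC hVC hCU hCG.
have hVWC : (V <= W :&: C)%MS by rewrite sub_capmx hVW hVC.
have := hW'S (W :&: C)%MS (submod_cap hW hC) hVWC (capmxSl _ _) (hWS C hC hVC hCU hCG).
move/inG_eqmx; apply => //.
rewrite capmxA; apply: cap_eqmx (eqmx_refl _).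
exact/capmx_idPl.
Qed.

Lemma TQ (Y : rmod L) (U V W W' : 'M[K]_(rdim Y)) :
  submod U -> submod V ->
  sstrict G U V W -> sstrict G U W W' -> sstrict G U V W'.
Proof.
move=> hU hV [hW hVW hWU hWG hWS] [hW' hWW' hW'U hW'G hW'S].
have hVW' := submx_trans hVW hWW'.
split => //; first exact: (@EC _ _ G hG Y W' V W hW' hV hW hVW hWW' hWG hW'G).
move=> C hC hVC hCU hCG.
have hWC : inG G (W :&: C)%MS V by apply: hWS.
have hCW : inG G (C + W)%MS W.
  have hq : inG G C (C :&: W)%MS.
    apply: (@QC _ _ G hG Y C V (C :&: W)%MS hV (submod_cap hC hW) _ (capmxSl _ _) hCG).
    by rewrite sub_capmx hVC hVW.
  by case: hq => N [hN h]; exists N; split => //; exact: ISO2 h.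
have h1 : inG G (W' :&: (C + W))%MS W.
  apply: hW'S hCW; [exact: submod_adds | exact: addsmxSr | by rewrite addsmx_sub hCU].
have h2 : inG G ((C :&: W') + W)%MS W.
  apply: inG_eqmx h1 _ (eqmx_refl _).
  rewrite capmxC addsmxC [(_ + W)%MS]addsmxC.
  exact: eqmx_sym (matrix_modl C hWW').
have h3 := ISO2inv hG (submod_cap hC hW') hW h2.
have e3 : ((C :&: W') :&: W :=: W :&: C)%MS.
  apply/eqmxP/andP; split.
    by rewrite !sub_capmx capmxSr /= (submx_trans (capmxSl _ _) (capmxSl _ _)).
  by rewrite !sub_capmx capmxSl capmxSr /= (submx_trans (capmxSl _ _) hWW').
have h4 : inG G (C :&: W')%MS (W :&: C)%MS := inG_eqmx h3 (eqmx_refl _) e3.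
rewrite capmxC.
apply: (@EC _ _ G hG Y (C :&: W')%MS V (W :&: C)%MS (submod_cap hC hW') hV (submod_cap hW hC) _ _ hWC h4).
  by rewrite sub_capmx hVW hVC.
by rewrite sub_capmx capmxSr /= (submx_trans (capmxSl _ _) hWW').
Qed.

Lemma sstrict_top (Y : rmod L) (U V : 'M[K]_(rdim Y)) :
  submod U -> (V <= U)%MS -> inG G U V -> sstrict G U V U.
Proof.
move=> hU hVU hUG; split => // C hC hVC hCU hCG.
apply: inG_eqmx hCG _ (eqmx_refl _).
exact: eqmx_sym (capmx_idPr hCU).
Qed.

Lemma sstrict_bot (Y : rmod L) (U V : 'M[K]_(rdim Y)) :
  submod V -> (V <= U)%MS -> inG G V V -> sstrict G U V V.
Proof.
move=> hV hVU hVG; split => // C hC hVC hCU hCG.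
apply: inG_eqmx hVG _ (eqmx_refl _).
exact: eqmx_sym (capmx_idPl hVC).
Qed.

End Strict.

Local Open Scope classical_set_scope.

Section Ana.
Variable R : realType.
Implicit Types g : R -> R.

Lemma der_lim g x : derivable g x 1 ->
  (fun h => h^-1 * (g (h + x) - g x)) @ 0^' --> g^`() x.
Proof.
move=> d; rewrite derive1E.
move: d; rewrite /derivable /derive.
set g1 := fun h => h^-1 *: _; set g2 := fun h => h^-1 * _.
suff -> : g1 = g2 by [].
rewrite funeqE /g1 /g2 => h /=; congr (_ * (g (_ + _) - _)); exact: mulr1.
Qed.

Lemma near0P (P : R -> Prop) : (\forall h \near 0^', P h) ->
  exists2 e : R, 0 < e & forall h, `|h| < e -> h != 0 -> P h.
Proof.
case/nbhs_ballP => e e0 H; exists e => // h he hn.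
apply: H => //; rewrite /ball /= sub0r normrN //.
Qed.


Lemma cont_pos g x : derivable g x 1 -> 0 < g x ->
  exists2 e : R, 0 < e & forall u, `|u - x| < e -> 0 < g u.
Proof.
move=> /derivable1_diffP /differentiable_continuous hc gx.
have := @cvgr_gt _ _ _ _ g (g x) hc 0 gx.
move=> /(_ (nbhs_filter x)) /nbhs_ballP [e e0 H]; exists e => // u hu; apply: H.
by rewrite /ball /= distrC.
Qed.

Lemma cont_neg g x : derivable g x 1 -> g x < 0 ->
  exists2 e : R, 0 < e & forall u, `|u - x| < e -> g u < 0.
Proof.
move=> /derivable1_diffP /differentiable_continuous hc gx.
have := @cvgr_lt _ _ _ _ g (g x) hc 0 gx.
move=> /(_ (nbhs_filter x)) /nbhs_ballP [e e0 H]; exists e => // u hu; apply: H.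
by rewrite /ball /= distrC.
Qed.

Lemma der_pos g x : derivable g x 1 -> 0 < g^`() x ->
  exists2 e : R, 0 < e & forall h, `|h| < e -> h != 0 -> 0 < h^-1 * (g (h + x) - g x).
Proof.
move=> d gx; have := @cvgr_gt _ _ _ _ _ _ (der_lim d) 0 gx.
move=> /(_ (Proper_dnbhs_numFieldType (0:R))).
exact: near0P.
Qed.

Lemma first_root g a b :
  (forall x, 0 < g x -> exists2 e : R, 0 < e & forall u, `|u - x| < e -> 0 < g u) ->
  (forall x, g x < 0 -> exists2 e : R, 0 < e & forall u, `|u - x| < e -> g u < 0) ->
  a < b -> 0 < g a -> g b <= 0 ->
  exists r, [/\ a < r, r <= b, g r = 0 & forall u, a <= u -> u < r -> 0 < g u].
Proof.
move=> Hp Hn ab ga gb.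
set S := [set u | a <= u <= b /\ forall v, a <= v -> v <= u -> 0 < g v].
have Sa : S a.
  split; first by rewrite lexx ltW.
  by move=> v av va; have -> : v = a by apply/eqP; rewrite eq_le va av.
have ubS : ubound S b by move=> u [/andP [_ ->]].
have hs : has_sup S by split; [exists a | exists b].
set r := sup S.
have ar : a <= r := sup_upper_bound hs Sa.
have rb : r <= b := ge_sup (ex_intro _ a Sa) ubS.
have claim1 : forall u, a <= u -> u < r -> 0 < g u.
  move=> u au ur.
  have ru : 0 < r - u by rewrite subr_gt0.
  have [s [_ Ss] us] := sup_adherent ru hs.
  apply: Ss => //; apply: ltW; move: us; rewrite /r; lra.
have [grn|grp|gr0] := ltrgtP (g r) 0.
- exfalso.
  have ar' : a < r by rewrite lt_neqAle ar andbT; apply/eqP => e; move: ga; rewrite e; lra.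
  have [e e0 He] := Hn _ grn.
  have [h|h] := leP a (r - e / 2).
    have := He (r - e / 2); have := claim1 (r - e / 2) h.
    have -> : `|r - e / 2 - r| = e / 2 by rewrite addrAC subrr add0r normrN ger0_norm; lra.
    lra.
  have := He a; have := claim1 a (lexx a) ar'.
  rewrite distrC ger0_norm; lra.
- exfalso.
  have [e e0 He] := Hp _ grp.
  have [h|h] := ltP r b; last first.
    have rb' : r = b by apply/eqP; rewrite eq_le rb h.
    by move: gb; rewrite -rb'; lra.
  set u := Order.min b (r + e / 2).
  have ru : r < u by rewrite /u lt_min h /=; lra.
  have ub : u <= b by rewrite /u ge_min lexx.
  have Su : S u.
    split; first by rewrite ub andbT; apply: le_trans ar (ltW ru).
    move=> v av vu; have [vr|rv] := ltP v r; first exact: claim1.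
    apply: He; rewrite ger0_norm ?subr_ge0 //.
    have : u <= r + e / 2 by rewrite /u ge_min lexx orbT.
    lra.
  have := sup_upper_bound hs Su; rewrite -/r; lra.
- exists r; split => //.
  rewrite lt_neqAle ar andbT; apply/eqP => e; move: ga; rewrite e gr0; lra.
Qed.

Section Smooth.
Variable g : R -> R.
Hypothesis dg : forall x, derivable g x 1.

Let Hp x : 0 < g x -> exists2 e : R, 0 < e & forall u, `|u - x| < e -> 0 < g u.
Proof. exact: cont_pos. Qed.
Let Hn x : g x < 0 -> exists2 e : R, 0 < e & forall u, `|u - x| < e -> g u < 0.
Proof. exact: cont_neg. Qed.

Lemma right_pos s : 0 <= g s -> (g s = 0 -> 0 < g^`() s) ->
  exists2 d : R, 0 < d & forall u, s < u -> u < s + d -> 0 < g u.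
Proof.
move=> g0 hd; have [gp|ge] := ltP 0 (g s).
  have [e e0 He] := Hp gp; exists e => // u su us; apply: He.
  rewrite ger0_norm; lra.
have gs0 : g s = 0 by apply/eqP; rewrite eq_le ge g0.
have [e e0 He] := der_pos (@dg s) (hd gs0); exists e => // u su us.
have := He (u - s); rewrite ger0_norm ?subr_ge0 ?ltW // subrK gs0 subr0.
have hn : u - s != 0 by rewrite subr_eq0 gt_eqF.
have hi : 0 < (u - s)^-1 by rewrite invr_gt0 subr_gt0.
move=> /(_ _ hn); move: hi; set k := (u - s)^-1; have : u - s < e by lra.
move=> h1 h2 /(_ h1); nra.
Qed.

Lemma left_neg s : g s <= 0 -> (g s = 0 -> 0 < g^`() s) ->
  exists2 d : R, 0 < d & forall u, s - d < u -> u < s -> g u < 0.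
Proof.
move=> g0 hd; have [gp|ge] := ltP (g s) 0.
  have [e e0 He] := Hn gp; exists e => // u su us; apply: He.
  rewrite ler0_norm; lra.
have gs0 : g s = 0 by apply/eqP; rewrite eq_le ge g0.
have [e e0 He] := der_pos (@dg s) (hd gs0); exists e => // u su us.
have := He (u - s); rewrite ler0_norm ?subr_le0 ?ltW // subrK gs0 subr0.
have hn : u - s != 0 by rewrite subr_eq0 lt_eqF.
have hi : (u - s)^-1 < 0 by rewrite invr_lt0 subr_lt0.
move=> /(_ _ hn); move: hi; set k := (u - s)^-1; have : - (u - s) < e by lra.
move=> h1 h2 /(_ h1); nra.
Qed.

Lemma root_right s t : s < t -> g t <= 0 ->
  (exists2 d : R, 0 < d & forall u, s < u -> u < s + d -> 0 < g u) ->
  exists r, [/\ s < r, g r = 0 & ~ (0 < g^`() r)].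
Proof.
move=> st gt [d d0 Hd].
set d' := Order.min d (t - s).
have d'0 : 0 < d' by rewrite lt_min d0 subr_gt0 st.
have d'd : d' <= d by rewrite ge_min lexx.
have d't : d' <= t - s by rewrite ge_min lexx orbT.
set a := s + d' / 2.
have ga : 0 < g a by apply: Hd; rewrite /a; lra.
have at' : a < t by rewrite /a; lra.
have [r [ar rt gr Hr]] := first_root Hp Hn at' ga gt.
exists r; split => //; first by rewrite /a in ar; lra.
move=> gd; have [e e0 He] := der_pos (@dg r) gd.
set h := - (Order.min e (r - a)) / 2.
have m0 : 0 < Order.min e (r - a) by rewrite lt_min e0 subr_gt0 ar.
have me : Order.min e (r - a) <= e by rewrite ge_min lexx.
have mr : Order.min e (r - a) <= r - a by rewrite ge_min lexx orbT.
have hn : h != 0 by rewrite /h; apply/eqP; lra.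
have hh : `|h| < e by rewrite /h ler0_norm; lra.
have := He h hh hn; rewrite gr subr0.
have gp : 0 < g (h + r) by apply: Hr; rewrite /h; lra.
have hi : h^-1 < 0 by rewrite invr_lt0 /h; lra.
move: gp hi; set k := h^-1; set z := g (h + r); nra.
Qed.

Lemma root_left s t : t < s -> 0 <= g t ->
  (exists2 d : R, 0 < d & forall u, s - d < u -> u < s -> g u < 0) ->
  exists r, [/\ r < s, g r = 0 & ~ (0 < g^`() r)].
Proof.
move=> ts gt [d d0 Hd].
set d' := Order.min d (s - t).
have d'0 : 0 < d' by rewrite lt_min d0 subr_gt0 ts.
have d'd : d' <= d by rewrite ge_min lexx.
have d't : d' <= s - t by rewrite ge_min lexx orbT.
set b := s - d' / 2.
have gb : g b < 0 by apply: Hd; rewrite /b; lra.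
set f := fun u => - g (- u).
have Hpf x : 0 < f x -> exists2 e : R, 0 < e & forall u, `|u - x| < e -> 0 < f u.
  rewrite /f oppr_gt0 => /Hn [e e0 He]; exists e => // u hu.
  rewrite oppr_gt0; apply: He; by rewrite -opprD normrN.
have Hnf x : f x < 0 -> exists2 e : R, 0 < e & forall u, `|u - x| < e -> f u < 0.
  rewrite /f oppr_lt0 => /Hp [e e0 He]; exists e => // u hu.
  rewrite oppr_lt0; apply: He; by rewrite -opprD normrN.
have fb : 0 < f (- b) by rewrite /f opprK oppr_gt0.
have ft : f (- t) <= 0 by rewrite /f opprK oppr_le0.
have bt : - b < - t by rewrite /b; lra.
have [r' [ar rt gr Hr]] := first_root Hpf Hnf bt fb ft.
exists (- r'); split.
- rewrite /b in ar; lra.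
- by move: gr; rewrite /f => /eqP; rewrite oppr_eq0 => /eqP.
move=> gd; have [e e0 He] := der_pos (@dg (- r')) gd.
set m := Order.min e (b + r').
have m0 : 0 < m by rewrite lt_min e0 /=; lra.
have me : m <= e by rewrite ge_min lexx.
have mr : m <= b + r' by rewrite ge_min lexx orbT.
set h := m / 2.
have hn : h != 0 by rewrite /h; apply/eqP; lra.
have hh : `|h| < e by rewrite /h ger0_norm; lra.
have g0' : g (- r') = 0 by move: gr; rewrite /f => /eqP; rewrite oppr_eq0 => /eqP.
have := He h hh hn; rewrite g0' subr0.
have gn : g (h - r') < 0.
  have := Hr (r' - h); rewrite /f oppr_gt0 [- (r' - h)]opprB; apply; rewrite /h; lra.
have hi : 0 < h^-1 by rewrite invr_gt0 /h; lra.
move: gn hi; set k := h^-1; set z := g (h - r'); nra.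
Qed.

End Smooth.
End Ana.

Local Close Scope classical_set_scope.

Section KLsec.
Variables (K : fieldType) (L : falgType K) (R : realType).
Variable G : rmod L -> Prop.
Variable th : R -> rmod L -> R.
Hypothesis hG : torsion_class G.
Hypothesis hgp : green_path G th.

Lemma hadd s : Defs.additive (th s).
Proof. by case: hgp. Qed.

Lemma hder (N : rmod L) x : derivable (fun u => th u N) x 1.
Proof. by case: hgp => _ hs _ _ _; exact: (hs N 0%N x). Qed.

Lemma hgreen s (N : rmod L) : G N -> (0 < rdim N)%N -> inD G (th s) N ->
  0 < derive1 (fun u => th u N) s.
Proof. by case: hgp => _ _ h _ _; exact: h. Qed.

Section InD.
Variables (Y N0 : rmod L) (U V : 'M[K]_(rdim Y)).
Hypotheses (hV : submod V) (hN0 : sq_iso U V N0).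

Lemma inD_of s : th s N0 = 0 ->
  (forall W N', sstrict G U V W -> sq_iso W V N' -> th s N' <= 0) ->
  inD G (th s) N0.
Proof.
case: hN0 => F [hF hFV hrk hact] h0 H; split => // Wn N' hs hs'.
apply: (H (Wn *m F + V)%MS N').
  exact/(sstrict_phi G hF hFV hrk hact hV).
apply: sq_iso_eqmx (eqmx_refl _) (phi0E V F) _.
exact: (sq_iso_phi hF hFV hrk hact).
Qed.

Lemma not_inD s : ~ inD G (th s) N0 -> th s N0 = 0 ->
  exists W N', [/\ sstrict G U V W, sq_iso W V N' & 0 < th s N'].
Proof.
move=> nD h0; apply: contra_notP nD => nE; apply: inD_of => // W N' hs hs'.
rewrite leNgt; apply/negP => hp; apply: nE; exists W, N'; split => //.
Qed.

End InD.

Lemma rank_lt (Y : rmod L) (U V : 'M[K]_(rdim Y)) :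
  (V <= U)%MS -> ~ (U <= V)%MS -> (\rank V < \rank U)%N.
Proof.
move=> hVU nUV; have [h1 h2] := mxrank_leqif_sup hVU.
by rewrite ltn_neqAle h1 andbT h2; apply/negP.
Qed.

Lemma nat_aux a b c n : (a - c < n.+1)%N -> (c < b)%N -> (b <= a)%N -> (a - b < n)%N.
Proof. lia. Qed.

Lemma nat_aux2 a b c n : (a - c < n.+1)%N -> (b < a)%N -> (c <= b)%N -> (b - c < n)%N.
Proof. lia. Qed.

Definition Pbar s (Y : rmod L) (U V : 'M[K]_(rdim Y)) :=
  forall W, sstrict G U V W -> ~ (U <= W)%MS -> forall N, sq_iso U W N -> 0 <= th s N.

Definition Qbar s (Y : rmod L) (U V : 'M[K]_(rdim Y)) :=
  forall W, sstrict G U V W -> ~ (W <= V)%MS -> forall N, sq_iso W V N -> th s N <= 0.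

Lemma eqmx_of (Y : rmod L) (A B : 'M[K]_(rdim Y)) : (A <= B)%MS -> (B <= A)%MS -> (A :=: B)%MS.
Proof. by move=> h1 h2; apply/eqmxP; rewrite h1 h2. Qed.

Lemma KL s (Y : rmod L) n : forall (U V : 'M[K]_(rdim Y)),
  (\rank U - \rank V < n)%N -> submod U -> submod V -> (V <= U)%MS ->
  inG G U V -> ~ (U <= V)%MS -> Pbar s U V ->
  forall t N, s < t -> sq_iso U V N -> 0 < th t N.
Proof.
elim: n => [|n IH] U V hn hU hV hVU hUV nUV hP t N st hN; first by [].
have [N0 [hN0G hN0]] := hUV.
rewrite (th_iso (hadd t) hV hN hN0).
have rk := rank_lt hVU nUV.
have rd : (0 < rdim N0)%N by have := sq_iso_rank hN0; lia.
set g := fun u => th u N0.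
have dg : forall x, derivable g x 1 := fun x => @hder N0 x.
have gs : 0 <= g s.
  apply: (hP V _ nUV N0 hN0); apply: sstrict_bot => //; exact: (inG_refl hG V hN0G).
have hd : g s = 0 -> 0 < derive1 g s.
  move=> g0; apply: (@hgreen s N0 hN0G rd); apply: (inD_of hV hN0) => // W N' hs hs'.
  case: hs => [hW hVW hWU hWG hWS].
  have [hUW|nUW] := boolP (U <= W)%MS.
    have e : (W :=: U)%MS := eqmx_of hWU hUW.
    have := th_iso (hadd s) hV (sq_iso_eqmx e (eqmx_refl V) hs') hN0.
    by rewrite -/(g s) g0 => ->.
  have [N'' hN''] := exists_sq hU hW hWU.
  have := hP W (And5 hW hVW hWU hWG hWS) (elimN idP nUW) N'' hN''.
  have := th_add (hadd s) hV hW hVW hWU hN0 hs' hN''.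
  rewrite -/(g s) g0; lra.
have [d d0 Hd] := right_pos dg gs hd.
rewrite ltNge; apply/negP => gt.
have [r [sr gr ngr]] := root_right dg st gt (ex_intro2 _ _ d d0 Hd).
have nD : ~ inD G (th r) N0 by move=> D; apply: ngr; exact: (@hgreen r N0 hN0G rd D).
have [W [N' [hs hs' hp]]] := not_inD hV hN0 nD gr.
have hs0 := hs; case: hs0 => [hW hVW hWU hWG hWS].
have nUW : ~ (U <= W)%MS.
  move=> hUW; have e : (W :=: U)%MS := eqmx_of hWU hUW.
  have := th_iso (hadd r) hV (sq_iso_eqmx e (eqmx_refl V) hs') hN0.
  rewrite -/(g r) gr; lra.
have nWV : ~ (W <= V)%MS.
  by move=> hWV; have := th_zero (hadd r) hs' hWV; lra.
have rk2 := rank_lt hVW nWV.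
have [N2 hN2] := exists_sq hU hW hWU.
have h2 : 0 < th r N2.
  have hn2 : (\rank U - \rank W < n)%N := nat_aux hn rk2 (mxrankS hWU).
  have hUW : inG G U W := @QC _ _ G hG Y U V W hV hW hVW hWU hUV.
  have hP2 : Pbar s U W.
    move=> W' hs2 nUW' N'' hN''; apply: (hP W' _ nUW' N'' hN'').
    exact: (@TQ _ _ G hG Y U V W W' hU hV hs hs2).
  exact: (IH U W hn2 hU hW hWU hUW nUW hP2 r N2 sr hN2).

have := th_add (hadd r) hV hW hVW hWU hN0 hs' hN2.
rewrite -/(g r) gr; lra.
Qed.

Lemma QKL s (Y : rmod L) n : forall (U V : 'M[K]_(rdim Y)),
  (\rank U - \rank V < n)%N -> submod U -> submod V -> (V <= U)%MS ->
  inG G U V -> ~ (U <= V)%MS -> Qbar s U V ->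
  forall t N, t < s -> sq_iso U V N -> th t N < 0.
Proof.
elim: n => [|n IH] U V hn hU hV hVU hUV nUV hQ t N ts hN; first by [].
have [N0 [hN0G hN0]] := hUV.
rewrite (th_iso (hadd t) hV hN hN0).
have rk := rank_lt hVU nUV.
have rd : (0 < rdim N0)%N.
  have := sq_iso_rank hN0; move: rk; clear; lia.
set g := fun u => th u N0.
have dg : forall x, derivable g x 1 := fun x => @hder N0 x.
have gs : g s <= 0.
  apply: (hQ U _ nUV N0 hN0); exact: sstrict_top.
have hd : g s = 0 -> 0 < derive1 g s.
  move=> g0; apply: (@hgreen s N0 hN0G rd); apply: (inD_of hV hN0) => // W N' hs hs'.
  have [hWV|nWV] := boolP (W <= V)%MS; first by rewrite (th_zero (hadd s) hs' hWV).
  exact: (hQ W hs (elimN idP nWV) N' hs').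
have [d d0 Hd] := left_neg dg gs hd.
rewrite ltNge; apply/negP => gt.
have [r [rs gr ngr]] := root_left dg ts gt (ex_intro2 _ _ d d0 Hd).
have nD : ~ inD G (th r) N0 by move=> D; apply: ngr; exact: (@hgreen r N0 hN0G rd D).
have [W [N' [hs hs' hp]]] := not_inD hV hN0 nD gr.
have hs0 := hs; case: hs0 => [hW hVW hWU hWG hWS].
have nUW : ~ (U <= W)%MS.
  move=> hUW; have e : (W :=: U)%MS := eqmx_of hWU hUW.
  have := th_iso (hadd r) hV (sq_iso_eqmx e (eqmx_refl V) hs') hN0.
  rewrite -/(g r) gr; lra.
have nWV : ~ (W <= V)%MS.
  by move=> hWV; have := th_zero (hadd r) hs' hWV; lra.
have rk2 := rank_lt hWU nUW.
have hn2 : (\rank W - \rank V < n)%N := nat_aux2 hn rk2 (mxrankS hVW).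
have hQ2 : Qbar s W V.
  move=> W' hs2 nW'V N'' hN''; apply: (hQ W' _ nW'V N'' hN'').
  exact: (TS hs hs2).
have := IH W V hn2 hW hV hVW hWG nWV hQ2 r N' rs hs'.
lra.
Qed.

End KLsec.

Section Main.
Variables (K : fieldType) (L : falgType K) (R : realType).
Variable G : rmod L -> Prop.
Variable th : R -> rmod L -> R.
Hypothesis hG : torsion_class G.
Hypothesis hgp : green_path G th.

Lemma sq_iso_id (N : rmod L) : sq_iso (1%:M : 'M[K]_(rdim N)) 0 N.
Proof.
exists 1%:M; split.
- by rewrite /row_free mxrank1.
- exact: addsmx0.
- by rewrite mxrank0 addn0.
- by move=> a; rewrite mulmx1 mul1mx subrr sub0mx.
Qed.

Lemma ltn_rank_aux (a b : nat) : (a - b < a.+1)%N.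
Proof. lia. Qed.

Lemma W_P s t (Nk : rmod L) : inW G (th s) Nk -> s < t ->
  forall Wn : 'M[K]_(rdim Nk), strict_sub G Wn -> ~ (1%:M <= Wn)%MS ->
  forall N2, sq_iso 1%:M Wn N2 -> 0 < th t N2.
Proof.
case: (hG) => hiso hquot hext.
move=> [hNkG [hD0 hD]] st Wn hWs n1W N2 hN2.
have hWs0 := hWs; case: hWs0 => [[hWn hWnG] _].
apply: (KL hG hgp (ltn_rank_aux _ _) (submod1 Nk) hWn (submx1 _) _ n1W _ st hN2).
  exact: hquot.
move=> W' hs2 n1W' N'' hN''.
have hs1 : sstrict G 1%:M 0 Wn by apply/strict_sstrict.
have hs3 := TQ hG (submod1 Nk) (submod0 Nk) hs1 hs2.
have hW' : strict_sub G W' by apply/strict_sstrict.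
have hs3' := hs3; case: hs3' => [hW'm _ _ _ _].
have [N3 hN3] := exists_sq hW'm (submod0 Nk) (sub0mx _ _).
have := hD W' N3 hW' hN3.
have := th_add (hadd hgp s) (submod0 Nk) hW'm (sub0mx _ _) (submx1 _) (sq_iso_id Nk) hN3 hN''.
rewrite hD0; lra.
Qed.

Definition RP t0 (Y : rmod L) (X : 'M[K]_(rdim Y)) :=
  forall B, sstrict G X 0 B -> ~ (X <= B)%MS -> forall N, sq_iso X B N -> 0 < th t0 N.

Lemma RP_step t0 s (Y : rmod L) (X A : 'M[K]_(rdim Y)) (Nk : rmod L) :
  submod X -> submod A -> (A <= X)%MS -> inG G A 0 ->
  sq_iso X A Nk -> inW G (th s) Nk -> s < t0 -> RP t0 A -> RP t0 X.
Proof.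
move=> hX hA hAX hAG hNk hW st hRA B [hB _ hBX hBG hBS] nXB N hN.
have hAB := submod_adds hA hB.
have hBAB : (B <= A + B)%MS := addsmxSr _ _.
have hABX : (A + B <= X)%MS by rewrite addsmx_sub hAX hBX.
have [N1 hN1] := exists_sq hAB hB hBAB.
have [N2 hN2] := exists_sq hX hAB hABX.
have e := th_add (hadd hgp t0) hB hAB hBAB hABX hN hN1 hN2.
have p1 : 0 <= th t0 N1 /\ (~ (A <= B)%MS -> 0 < th t0 N1).
  have hAcB := submod_cap hA hB.
  have [N3 hN3] := exists_sq hA hAcB (capmxSl A B).
  have e3 := th_iso (hadd hgp t0) hB (ISO2 hN3) hN1.
  have [hAB'|nAB] := boolP (A <= B)%MS.
    have hz : (A + B <= B)%MS by rewrite addsmx_sub hAB' submx_refl.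
    by rewrite (th_zero (hadd hgp t0) hN1 hz); split => // /(_ is_true_true).
  have pos : 0 < th t0 N3.
    apply: (hRA (A :&: B)%MS _ _ N3 hN3).
      split => //; [exact: sub0mx | exact: capmxSl | |].
        by rewrite capmxC; apply: hBS => //; exact: sub0mx.
      move=> C hC h0C hCA hCG.
      apply: inG_eqmx (hBS C hC h0C (submx_trans hCA hAX) hCG) _ (eqmx_refl _).
      apply: eqmx_of; rewrite !sub_capmx ?capmxSl ?capmxSr ?andbT //=.
        by rewrite (submx_trans (capmxSr _ _) hCA).
      by rewrite (submx_trans (capmxSl _ _) (capmxSr _ _)).
    move=> h; move/negP: nAB; apply; exact: submx_trans h (capmxSr _ _).
  by rewrite -e3; split => //; exact: ltW.
have hsAB : sstrict G X A (A + B)%MS.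
  split => //; first exact: addsmxSl.
    have q : inG G B (B :&: A)%MS.
      exact: (@QC _ _ G hG Y B 0 (B :&: A)%MS (submod0 Y) (submod_cap hB hA) (sub0mx _ _) (capmxSl _ _) hBG).
    case: q => N' [hN'G hN']; exists N'; split => //.
    apply: (sq_iso_eqmx _ (eqmx_refl _) (ISO2 hN')).
    rewrite addsmxC; exact: eqmx_refl.
  move=> C hC hAC hCX hCG.
  have hC0 : inG G C 0 := @EC _ _ G hG Y C 0 A hC (submod0 Y) hA (sub0mx _ _) hAC hAG hCG.
  have hBC : inG G (B :&: C)%MS 0 := hBS C hC (sub0mx _ _) hCX hC0.
  have q : inG G (B :&: C)%MS ((B :&: C) :&: A)%MS.
    exact: (@QC _ _ G hG Y (B :&: C)%MS 0 ((B :&: C) :&: A)%MS (submod0 Y) (submod_cap (submod_cap hB hC) hA) (sub0mx _ _) (capmxSl _ _) hBC).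
  case: q => N' [hN'G hN']; exists N'; split => //.
  apply: (sq_iso_eqmx _ (eqmx_refl _) (ISO2 hN')).
  rewrite addsmxC; exact: matrix_modl.
have p2 : 0 <= th t0 N2 /\ (~ (X <= A + B)%MS -> 0 < th t0 N2).
  have [hX'|nX] := boolP (X <= A + B)%MS.
    by rewrite (th_zero (hadd hgp t0) hN2 hX'); split => // /(_ is_true_true).
  case: hNk => F [hF hFV hrk hact].
  set Wn := <<coef F A (A + B)%MS>>%MS.
  have ephi := phi_gen hF hFV hrk (addsmxSl A B) hABX.
  have hWs : strict_sub G Wn.
    apply/(sstrict_phi G hF hFV hrk hact hA Wn).
    exact: (@sstrict_eqmx _ _ G Y X A (A + B)%MS _ (eqmx_sym ephi) hsAB).
  have n1W : ~ (1%:M <= Wn)%MS.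
    move=> h; move/negP: nX; apply.
    rewrite -ephi -(phi1E hFV) addsmx_sub addsmxSr andbT.
    by rewrite (phiP hF hFV hrk).
  have hN2' : sq_iso 1%:M Wn N2.
    apply: (sq_iso_phiV hF hFV hrk hact hA).
    exact: sq_iso_eqmx (eqmx_sym (phi1E hFV)) (eqmx_sym ephi) hN2.
  have pos := W_P hW st hWs n1W hN2'.
  by split => //; exact: ltW.
rewrite e.
have [hAB'|nAB] := boolP (A <= B)%MS; last first.
  have := p1.2 (elimN idP nAB); have := p2.1; lra.
have [hX'|nX] := boolP (X <= A + B)%MS; last first.
  have := p2.2 (elimN idP nX); have := p1.1; lra.
exfalso; apply: nXB; apply: submx_trans hX' _.
by rewrite addsmx_sub hAB' submx_refl.
Qed.

End Main.

Lemma nat_aux3 (a b c : nat) : a = (b + c)%N -> (c < a)%N -> (0 < b)%N.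
Proof. lia. Qed.

Unset Implicit Arguments.
Theorem mainTheorem20 (K : fieldType) (L : falgType K) (R : realType)
  (G : rmod L -> Prop) (theta : R -> rmod L -> R) (t0 : R)
  (M : rmod L) (m : nat) (Ms : nat -> 'M[K]_(rdim M)) (t : nat -> R) :
  torsion_class G ->
  green_path G theta ->
  G M -> (0 < rdim M)%N ->
  (Ms 0%N == (1%:M : 'M[K]_(rdim M)))%MS -> (Ms m == (0 : 'M[K]_(rdim M)))%MS ->
  (forall k, (k <= m)%N -> strict_sub G (Ms k)) ->
  (forall k, (0 < k <= m)%N -> (Ms k < Ms k.-1)%MS) ->
  (forall k, (0 < k <= m)%N ->
     exists N, sq_iso (Ms k.-1) (Ms k) N /\ inW G (theta (t k)) N) ->
  (forall k, (0 < k < m)%N -> t k.+1 < t k) ->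
  (inP G (theta t0) M <-> (forall k, (0 < k <= m)%N -> t k < t0)) /\
  (inP G (theta t0) M <-> t 1%N < t0).
Proof.
move=> hG hgp hM hdim e0 em hstr hlt hfac hdec.
have e0' := elimT eqmxP e0.
have em' := elimT eqmxP em.
have m1 : (0 < m)%N.
  rewrite lt0n; apply/eqP => m0; move: em'; rewrite m0 => e.
  have : \rank (1%:M : 'M[K]_(rdim M)) = \rank (0 : 'M[K]_(rdim M)) by rewrite -e0' e.
  rewrite mxrank1 mxrank0; move: hdim; clear; lia.
have h1m : (0 < 1 <= m)%N by rewrite m1.
have tle : forall k, (0 < k <= m)%N -> t k <= t 1%N.
  elim=> [|k IH] //; case: k IH => [|k] IH hk; first exact: lexx.
  have hk1 : (0 < k.+1 <= m)%N by move: hk; clear; lia.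
  have hk2 : (0 < k.+1 < m)%N by move: hk; clear; lia.
  have := IH hk1; have := hdec _ hk2; lra.
have ci : inP G (theta t0) M -> t 1%N < t0.
  move=> [_ hP].
  have [N1 [hN1 [hN1G hD1]]] := hfac 1%N h1m.
  have hlt1 := hlt 1%N h1m.
  have n01 : ~ (Ms 0%N <= Ms 1%N)%MS.
    by move: hlt1; rewrite ltmxE => /andP [_ /negP].
  have hN1' : sq_iso 1%:M (Ms 1%N) N1 := sq_iso_eqmx e0' (eqmx_refl _) hN1.
  have n1 : ~ (1%:M <= Ms 1%N)%MS by rewrite -e0'.
  have pos := hP (Ms 1%N) N1 (hstr 1%N m1) n1 hN1'.
  have rdN1 : (0 < rdim N1)%N.
    exact: nat_aux3 (sq_iso_rank hN1) (rank_lt (ltmxW hlt1) n01).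
  rewrite ltNge; apply/negP => ht.
  have [tl|te] : t0 < t 1%N \/ t0 = t 1%N.
    by move: ht; rewrite le_eqVlt => /orP [/eqP ->|->]; [right|left].
    have hQ : Qbar G theta (t 1%N) (1%:M : 'M[K]_(rdim N1)) 0.
      move=> W hs nW0 N'' hN''.
      exact: hD1.2 W N'' ((strict_sstrict G W).2 hs) hN''.
    have n10 : ~ (1%:M <= (0 : 'M[K]_(rdim N1)))%MS.
      by rewrite submx0 -mxrank_eq0 mxrank1 => /eqP h; move: rdN1; rewrite h.
    have hUV : inG G (1%:M : 'M[K]_(rdim N1)) 0 by exists N1; split => //; exact: sq_iso_id.
    have := QKL hgp (ltnSn _) (submod1 N1) (submod0 N1) (sub0mx _ _) hUV n10 hQ tl (sq_iso_id N1).
    lra.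
  by move: pos; rewrite te hD1.1; lra.
have ciii : (forall k, (0 < k <= m)%N -> t k < t0) -> inP G (theta t0) M.
  move=> htk.
  have RPall : forall j, (j <= m)%N -> RP G theta t0 (Ms (m - j)%N).
    elim=> [|j IH] hj.
      rewrite subn0 => B hs nMB N hN; exfalso; apply: nMB.
      by rewrite em' sub0mx.
    have hi : (0 < m - j <= m)%N by move: hj; clear; lia.
    have [Nk [hNk hW]] := hfac _ hi.
    rewrite subnS.
    have hjm : (m - j <= m)%N by move: hj; clear; lia.
    have hjm' : ((m - j).-1 <= m)%N by move: hj; clear; lia.
    have [[hA hAG] _] := hstr _ hjm.
    have [[hX _] _] := hstr _ hjm'.
    apply: (RP_step hG hgp hX hA (ltmxW (hlt _ hi)) hAG hNk hW (htk _ hi)).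
    exact: IH (ltnW hj).
  have RP0 := RPall m (leqnn m); rewrite subnn in RP0.
  split => // A N hA n1A hN.
  apply: (RP0 A _ _ N (sq_iso_eqmx (eqmx_sym e0') (eqmx_refl _) hN)).
    case: ((strict_sstrict G A).1 hA) => h1 h2 h3 h4 h5; split => //.
      by rewrite e0' submx1.
    by move=> C hC h0C _ hCG; apply: h5 => //; exact: submx1.
  by rewrite e0'.
split; split.
- move=> hP k hk; have := tle k hk; have := ci hP; lra.
- exact: ciii.
- exact: ci.
- move=> h1; apply: ciii => k hk; have := tle k hk; lra.
Qed.
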